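(* Let $\hat J$, $\hat\Delta_{\mathbf u,\mathbf v}$, $\hat\phi^+_{\mathbf u}$, $\hat\phi^-_{\mathbf u}$ be as in the context, and let the suboptimal policy be $\hat\mu^*(\mathbf Q)\in\arg\min_{\mathbf u\in\mathcal U}\hat J(\mathbf Q,\mathbf u)$. Then: (1) Let $\mathbf 0\in\mathcal U$ be the all-zero action and $\hat{\mathcal Q}_0=\{\mathbf Q\in\mathcal Q: Q_{n,m}\le\hat\phi^+_{\mathbf 0}(\mathbf Q_{-n,-m})\ \forall n\in\mathcal N,\ m\in\mathcal M_n\}$. For every $\mathbf Q\in\hat{\mathcal Q}_0$, $\hat\Delta_{\mathbf 0,\mathbf v}(\mathbf Q)\le0$ for all $\mathbf v\in\mathcal U$, so $\mathbf 0\in\arg\min_{\mathbf u}\hat J(\mathbf Q,\mathbf u)$. (2) Let $\mathbf u\in\mathcal U$ with $u_n=m\in\mathcal M_n$ for some $n\in\mathcal N$. Then for every $\mathbf Q\in\mathcal Q$ with $Q_{n,m}\ge\hat\phi^-_{\mathbf u}(\mathbf Q_{-n,-m})$ we have $\hat\Delta_{\mathbf u,\mathbf v}(\mathbf Q)\le0$ for all $\mathbf v\in\mathcal U$, so $\mathbf u\in\arg\min_{\mathbf v}\hat J(\mathbf Q,\mathbf v)$. Moreover, if $u_0=m\in\mathcal M_0$, then $\hat\phi^-_{\mathbf u}(\mathbf Q_{-0,-m})$ is monotonically non-increasing in $Q_{n,m}$ for every $n\in\mathcal N_m$.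
   Context: Model. Let $N\ge 1$, $\mathcal N=\{0,1,\dots,N\}$ (base station $0$ is the macro base station, MBS) and $\mathcal N^+=\{1,\dots,N\}$ (small base stations, SBSs). Let $\mathcal M=\{1,\dots,M\}$ be the set of contents. For each $n\in\mathcal N$ let $\mathcal M_n\subseteq\mathcal M$ be the set of contents cached at BS $n$, with $\mathcal M_0=\mathcal M$; put $\tilde{\mathcal M}_n=\mathcal M_n\cup\{0\}$ and $\mathcal N_m=\{n\in\mathcal N^+: m\in\mathcal M_n\}$. Powers $p(n,m)\ge 0$ are given for $n\in\mathcal N$, $m\in\mathcal M_n$, and $p(n,0)=0$. A weight $w\ge 0$ is fixed. The feasible action space is $\mathcal U=\{\mathbf u=(u_n)_{n\in\mathcal N}: u_n\in\tilde{\mathcal M}_n\ \forall n,\ u_0\sum_{n\in\mathcal N^+}u_n=0\}$. A state is $\mathbf Q=(Q_{n,m})_{n\in\mathcal N,m\in\mathcal M_n}$ with $Q_{n,m}\in\mathcal Q_{n,m}=\{0,1,\dots,N_{n,m}\}$ for given positive integers $N_{n,m}$; $\mathcal Q=\prod_{n\in\mathcal N}\prod_{m\in\mathcal M_n}\mathcal Q_{n,m}$. Arrivals $A_{n,m}$ ($n\in\mathcal N$, $m\in\mathcal M$) are mutually independent nonnegative-integer random variables with fixed distributions, i.i.d. across time slots; $\tilde A_{0,m}=A_{0,m}+\sum_{n\in\mathcal N^+\setminus\mathcal N_m}A_{n,m}$. Given state $\mathbf Q$ and action $\mathbf u$, the next state $\mathbf Q'$ is $Q'_{0,m}=\min\{\mathbf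 1(u_0\neq m)Q_{0,m}+\tilde A_{0,m},N_{0,m}\}$ for $m\in\mathcal M_0$ and $Q'_{n,m}=\min\{\mathbf 1(u_0\neq m\text{ and }u_n\neq m)Q_{n,m}+A_{n,m},N_{n,m}\}$ for $n\in\mathcal N^+$, $m\in\mathcal M_n$; $\mathbb E$ denotes expectation over the arrivals. The per-stage cost is $g(\mathbf Q,\mathbf u)=d(\mathbf Q)+w\,p(\mathbf u)$ with $d(\mathbf Q)=\sum_{n\in\mathcal N}\sum_{m\in\mathcal M_n}Q_{n,m}$ and $p(\mathbf u)=\sum_{n\in\mathcal N}p(n,u_n)$. Per-BS-content value functions. Let $\hat\mu$ be a randomized base policy: a fixed probability distribution on $\mathcal U$ from which the action is drawn each slot independently of state and arrivals; $\mathbb E^{\hat\mu}$ is expectation over $\mathbf u\sim\hat\mu$. For $n\in\mathcal N$, $m\in\mathcal M_n$ let $g_{n,m}(Q_{n,m},\mathbf u)=Q_{n,m}+w\mathbf 1(u_n=m)p(n,m)$ and $\Pr[Q'_{n,m}\mid Q_{n,m},\mathbf u]$ the transition probability of the $(n,m)$ component. Fix $Q^\dagger_{n,m}\in\mathcal Q_{n,m}$; define $\hat V^0_{n,m}\equiv0$, $\hat J^{l+1}_{n,m}(Q_{n,m})=\mathbb E^{\hat\mu}[g_{n,m}(Q_{n,m},\mathbf u)]+\sum_{Q'_{n,m}}\mathbb E^{\hat\mu}[\Pr[Q'_{n,m}\mid Q_{n,m},\mathbf u]]\hat V^l_{n,m}(Q'_{n,m})$, and $\hat V^{l+1}_{n,m}(Q_{n,m})=\hat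 J^{l+1}_{n,m}(Q_{n,m})-\hat J^{l+1}_{n,m}(Q^\dagger_{n,m})$. It is assumed that $\hat V^l_{n,m}\to\hat V_{n,m}$ pointwise; $\hat V_{n,m}$ then solves the per-BS-content fixed-point equation $\hat\theta_{n,m}+\hat V_{n,m}(Q_{n,m})=\mathbb E^{\hat\mu}[g_{n,m}(Q_{n,m},\mathbf u)]+\sum_{Q'_{n,m}}\mathbb E^{\hat\mu}[\Pr[Q'_{n,m}\mid Q_{n,m},\mathbf u]]\hat V_{n,m}(Q'_{n,m})$. Further notation. $\hat J(\mathbf Q,\mathbf u)=g(\mathbf Q,\mathbf u)+\sum_{n\in\mathcal N}\sum_{m\in\mathcal M_n}\mathbb E[\hat V_{n,m}(Q'_{n,m})]$ where $\mathbf Q'$ is the next state from $(\mathbf Q,\mathbf u)$; $\hat\Delta_{\mathbf u,\mathbf v}(\mathbf Q)=\hat J(\mathbf Q,\mathbf u)-\hat J(\mathbf Q,\mathbf v)$. For $(n,m)$ with $m\in\mathcal M_n$, $\mathbf Q_{-n,-m}=(Q_{i,j})_{(i,j)\neq(n,m)}$. Define $\hat\Phi_{\mathbf u}(\mathbf Q_{-n,-m})=\{Q_{n,m}\in\mathcal Q_{n,m}:\hat\Delta_{\mathbf u,\mathbf v}(Q_{n,m},\mathbf Q_{-n,-m})\le0\ \forall\mathbf v\in\mathcal U,\ \mathbf v\neq\mathbf u\}$, $\hat\phi^+_{\mathbf u}(\mathbf Q_{-n,-m})=\max\hat\Phi_{\mathbf u}(\mathbf Q_{-n,-m})$ if nonempty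 and $-\infty$ otherwise, $\hat\phi^-_{\mathbf u}(\mathbf Q_{-n,-m})=\min\hat\Phi_{\mathbf u}(\mathbf Q_{-n,-m})$ if nonempty and $+\infty$ otherwise. *)

(* Defs.v *)
From Stdlib Require Import Reals Arith List Bool ClassicalEpsilon.
Open Scope R_scope.

Fixpoint rsum (n : nat) (f : nat -> R) : R :=
  match n with O => 0 | S k => rsum k f + f k end.

Definition conv (p q : nat -> R) (k : nat) : R :=
  rsum (S k) (fun i => p i * q (k - i)%nat).

(* law of min(c + A, K) where A has pmf p (and c <= K):
   P[min(c+A,K) = q'] *)
Definition trunc_law (p : nat -> R) (c K q' : nat) : R :=
  if Nat.ltb q' K then (if Nat.leb c q' then p (q' - c)%nat else 0)
  else if Nat.eqb q' K then 1 - rsum (K - c)%nat p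
  else 0.

Definition decP (P : Prop) : bool :=
  if excluded_middle_informative P then true else false.

(* max of {x <= k | P x}; None encodes -infinity (empty set) *)
Fixpoint find_max (P : nat -> Prop) (k : nat) : option nat :=
  match k with
  | O => if decP (P O) then Some O else None
  | S k' => if decP (P (S k')) then Some (S k') else find_max P k'
  end.

Fixpoint find_min_aux (P : nat -> Prop) (i fuel : nat) : option nat :=
  match fuel with
  | O => None
  | S f => if decP (P i) then Some i else find_min_aux P (S i) f
  end.
(* min of {x <= k | P x}; None encodes +infinity (empty set) *)
Definition find_min (P : nat -> Prop) (k : nat) : option nat :=
  find_min_aux P O (S k).

(* q <= phi, with None = -infinity *)
Definition le_ninf (q : nat) (o : option nat) : Prop :=
  match o with None => False | Some x => (q <= x)%nat end.
(* phi <= q, with None = +infinity *)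
Definition ge_pinf (q : nat) (o : option nat) : Prop :=
  match o with None => False | Some x => (x <= q)%nat end.
(* order on nat u {+infinity} (None = +infinity) *)
Definition le_pinf (a b : option nat) : Prop :=
  match a, b with
  | _, None => True
  | None, Some _ => False
  | Some x, Some y => (x <= y)%nat
  end.

Record Model := {
  NB : nat;                                (* N : SBSs are 1..N, MBS is 0 *)
  NB_pos : (1 <= NB)%nat;
  MC : nat;                                (* M : contents are 1..M *)
  cache : nat -> nat -> bool;              (* cache n m  <->  m \in M_n *)
  cache_range : forall n m, cache n m = true -> (1 <= m <= MC)%nat;
  cache_MBS : forall m, cache 0 m = true <-> (1 <= m <= MC)%nat;
  pw : nat -> nat -> R;
  pw_nonneg : forall n m, (n <= NB)%nat -> cache n m = true -> 0 <= pw n m;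
  wt : R;
  wt_nonneg : 0 <= wt;
  cap : nat -> nat -> nat;
  cap_pos : forall n m, (n <= NB)%nat -> cache n m = true -> (0 < cap n m)%nat;
  arr : nat -> nat -> nat -> R;            (* arr n m k = P[A_{n,m} = k] *)
  arr_nonneg : forall n m k, (n <= NB)%nat -> (1 <= m <= MC)%nat -> 0 <= arr n m k;
  arr_sum1 : forall n m, (n <= NB)%nat -> (1 <= m <= MC)%nat -> infinite_sum (arr n m) 1
}.

Section Defs.
Variable Mdl : Model.

Definition natsum (f : nat -> nat) (a len : nat) : nat :=
  fold_right plus O (map f (seq a len)).

(* feasible action space U; actions are u : nat -> nat with u n = u_n,
   u n = 0 outside 0..N *)
Definition inU (u : nat -> nat) : Prop :=
  (forall n, (n <= NB Mdl)%nat -> u n = O \/ cache Mdl n (u n) = true) /\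
  (forall n, (NB Mdl < n)%nat -> u n = O) /\
  (u O * natsum u 1 (NB Mdl))%nat = O.

Definition zero_action : nat -> nat := fun _ => O.

(* state space: Q n m for n in 0..N, m in M_n *)
Definition validQ (Q : nat -> nat -> nat) : Prop :=
  forall n m, (n <= NB Mdl)%nat -> cache Mdl n m = true -> (Q n m <= cap Mdl n m)%nat.

(* pmf of tilde A_{0,m} = A_{0,m} + sum_{n in N^+ \ N_m} A_{n,m} (independent) *)
Definition tildeA (m : nat) : nat -> R :=
  fold_left (fun acc n => if cache Mdl n m then acc else conv acc (arr Mdl n m))
            (seq 1 (NB Mdl)) (arr Mdl O m).

Definition arrlaw (n m : nat) : nat -> R :=
  if Nat.eqb n O then tildeA m else arr Mdl n m.

Definition served (u : nat -> nat) (n m : nat) : bool :=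
  orb (Nat.eqb (u O) m) (andb (negb (Nat.eqb n O)) (Nat.eqb (u n) m)).

(* Pr[Q'_{n,m} = q' | Q_{n,m} = q, u] *)
Definition trP (n m q : nat) (u : nat -> nat) (q' : nat) : R :=
  trunc_law (arrlaw n m) (if served u n m then O else q) (cap Mdl n m) q'.

Definition sumDom (f : nat -> nat -> R) : R :=
  rsum (S (NB Mdl)) (fun n => rsum (S (MC Mdl)) (fun m =>
    if cache Mdl n m then f n m else 0)).

Definition dQ (Q : nat -> nat -> nat) : R := sumDom (fun n m => INR (Q n m)).

Definition pact (n k : nat) : R := if Nat.eqb k O then 0 else pw Mdl n k.
Definition pu (u : nat -> nat) : R := rsum (S (NB Mdl)) (fun n => pact n (u n)).

Definition gcost (Q : nat -> nat -> nat) (u : nat -> nat) : R :=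
  dQ Q + wt Mdl * pu u.

Definition gnm (n m q : nat) (u : nat -> nat) : R :=
  INR q + wt Mdl * (if Nat.eqb (u n) m then pw Mdl n m else 0).

(* randomized base policy: finite list of (probability, action) *)
Definition Emu (mu : list (R * (nat -> nat))) (f : (nat -> nat) -> R) : R :=
  fold_right Rplus 0 (map (fun p => fst p * f (snd p)) mu).

Definition is_base_policy (mu : list (R * (nat -> nat))) : Prop :=
  Forall (fun p => 0 <= fst p /\ inU (snd p)) mu /\
  fold_right Rplus 0 (map fst mu) = 1.

Definition Jnext (mu : list (R * (nat -> nat))) (Vprev : nat -> nat -> nat -> R)
  (n m q : nat) : R :=
  Emu mu (gnm n m q) +
  rsum (S (cap Mdl n m)) (fun q' => Emu mu (fun u => trP n m q u q') * Vprev n m q').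

Fixpoint Vit (mu : list (R * (nat -> nat))) (Qdag : nat -> nat -> nat) (l : nat)
  : nat -> nat -> nat -> R :=
  match l with
  | O => fun _ _ _ => 0
  | S l' => fun n m q =>
      Jnext mu (Vit mu Qdag l') n m q - Jnext mu (Vit mu Qdag l') n m (Qdag n m)
  end.

Definition Jhat (Vhat : nat -> nat -> nat -> R) (Q : nat -> nat -> nat) (u : nat -> nat) : R :=
  gcost Q u +
  sumDom (fun n m => rsum (S (cap Mdl n m)) (fun q' => trP n m (Q n m) u q' * Vhat n m q')).

Definition Deltahat Vhat (u v : nat -> nat) Q : R := Jhat Vhat Q u - Jhat Vhat Q v.

(* Q with entry (n,m) replaced by x : the state (x, Q_{-n,-m}) *)
Definition upd (Q : nat -> nat -> nat) (n m x : nat) : nat -> nat -> nat :=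
  fun i j => if andb (Nat.eqb i n) (Nat.eqb j m) then x else Q i j.

(* hat Phi_u(Q_{-n,-m}) (depends on Q only through Q_{-n,-m}) *)
Definition PhiSet Vhat (u : nat -> nat) Q (n m x : nat) : Prop :=
  (x <= cap Mdl n m)%nat /\
  forall v, inU v -> v <> u -> Deltahat Vhat u v (upd Q n m x) <= 0.

Definition phi_plus Vhat u Q n m : option nat :=
  find_max (PhiSet Vhat u Q n m) (cap Mdl n m).
Definition phi_minus Vhat u Q n m : option nat :=
  find_min (PhiSet Vhat u Q n m) (cap Mdl n m).

End Defs.

(* Main.v *)
Require Import Defs.
From Stdlib Require Import Reals Arith List ClassicalEpsilon Lia Lra FunctionalExtensionality Classical.
Open Scope R_scope.

Lemma rsum_ext_lt N f g : (forall i, (i < N)%nat -> f i = g i) -> rsum N f = rsum N g.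
Proof. induction N; simpl; intros H; auto. rewrite IHN, H; auto; intros; apply H; lia. Qed.

Lemma rsum_le N f g : (forall i, (i < N)%nat -> f i <= g i) -> rsum N f <= rsum N g.
Proof. induction N; simpl; intros H; [lra|]. pose proof (H N ltac:(lia)). pose proof (IHN ltac:(intros; apply H; lia)). lra. Qed.

Lemma rsum_zero N f : (forall i, (i < N)%nat -> f i = 0) -> rsum N f = 0.
Proof. induction N; simpl; intros H; auto. rewrite IHN, H; try lra; try lia; intros; apply H; lia. Qed.

Lemma rsum_nonneg N f : (forall i, (i < N)%nat -> 0 <= f i) -> 0 <= rsum N f.
Proof. intros H. rewrite <- (rsum_zero N (fun _ => 0)) by auto. apply rsum_le; auto. Qed.

Lemma rsum_plus N f g : rsum N (fun i => f i + g i) = rsum N f + rsum N g.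
Proof. induction N; simpl; [lra|]. rewrite IHN; lra. Qed.

Lemma rsum_scal N c f : rsum N (fun i => c * f i) = c * rsum N f.
Proof. induction N; simpl; [lra|]. rewrite IHN; lra. Qed.

Lemma rsum_diff N h h' k : (forall i, i <> k -> h' i = h i) ->
  rsum N h' = rsum N h + (if Nat.ltb k N then h' k - h k else 0).
Proof.
  intros H; induction N; [simpl; lra|]. cbn [rsum]. rewrite IHN.
  destruct (Nat.eq_dec k N) as [->|Hk].
  - rewrite Nat.ltb_irrefl. replace (Nat.ltb N (S N)) with true by (symmetry; apply Nat.ltb_lt; lia). lra.
  - rewrite (H N) by auto. destruct (Nat.ltb_spec k N); destruct (Nat.ltb_spec k (S N)); try lia; lra.
Qed.

Lemma reidx c j h : rsum (c + j) (fun q => if Nat.leb c q then h (q - c)%nat else 0) = rsum j h.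
Proof.
  induction j.
  - rewrite Nat.add_0_r. apply rsum_zero. intros i Hi. destruct (Nat.leb_spec c i); [lia|auto].
  - rewrite Nat.add_succ_r. simpl. rewrite IHj. replace (Nat.leb c (c+j)) with true by (symmetry; apply Nat.leb_le; lia).
    replace (c + j - c)%nat with j by lia. reflexivity.
Qed.

Definition F (p : nat -> R) (V : nat -> R) (K c : nat) : R :=
  rsum (S K) (fun q' => trunc_law p c K q' * V q').

Lemma F_eq p V K c : (c <= K)%nat ->
  F p V K c = V K + rsum (K - c) (fun i => p i * (V (c+i)%nat - V K)).
Proof.
  intros Hc. unfold F. simpl.
  rewrite (rsum_ext_lt K _ (fun q => if Nat.leb c q then (fun i => p i * V (c+i)%nat) (q - c)%nat else 0)).
  2:{ intros i Hi. unfold trunc_law. replace (Nat.ltb i K) with true by (symmetry; apply Nat.ltb_lt; lia).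
      destruct (Nat.leb_spec c i); [|lra]. replace (c + (i - c))%nat with i by lia. reflexivity. }
  assert (E: forall h, rsum K (fun q => if Nat.leb c q then h (q - c)%nat else 0) = rsum (K - c) h).
  { intros h. rewrite <- (reidx c (K - c) h). replace (c + (K - c))%nat with K by lia. reflexivity. }
  rewrite (E (fun i => p i * V (c+i)%nat)).
  unfold trunc_law. rewrite Nat.ltb_irrefl, Nat.eqb_refl.
  rewrite (rsum_ext_lt _ (fun i => p i * (V (c + i)%nat - V K)) (fun i => p i * V (c+i)%nat + (- V K) * p i)) by (intros; ring).
  rewrite rsum_plus, rsum_scal. ring.
Qed.

Lemma F_step p V K c : (forall i, 0 <= p i) -> (forall a b, (a <= b <= K)%nat -> V a <= V b) ->
  (S c <= K)%nat -> F p V K c <= F p V K (S c).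
Proof.
  intros Hp HV Hc. rewrite !F_eq by lia.
  replace (K - c)%nat with (S (K - S c)) by lia. simpl.
  set (j := (K - S c)%nat).
  assert (rsum j (fun i => p i * (V (c + i)%nat - V K)) <= rsum j (fun i => p i * (V (S (c + i)) - V K))).
  { apply rsum_le. intros i Hi. apply Rmult_le_compat_l; auto. assert (V (c+i)%nat <= V (S (c+i))) by (apply HV; unfold j in Hi; lia). lra. }
  assert (p j * (V (c + j)%nat - V K) <= 0).
  { assert (V (c+j)%nat <= V K) by (apply HV; unfold j; lia). pose proof (Hp j). nra. }
  lra.
Qed.

Lemma F_mono p V K c c' : (forall i, 0 <= p i) -> (forall a b, (a <= b <= K)%nat -> V a <= V b) ->
  (c <= c' <= K)%nat -> F p V K c <= F p V K c'.
Proof.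
  intros Hp HV H. replace c' with (c + (c' - c))%nat by lia.
  assert (Hd : (c + (c' - c) <= K)%nat) by lia. revert Hd. generalize (c' - c)%nat. intros d.
  induction d; intros Hd.
  - rewrite Nat.add_0_r; lra.
  - eapply Rle_trans. apply IHd; lia. rewrite Nat.add_succ_r. apply F_step; auto. lia.
Qed.

Section S.
Variable Mdl : Model.

Lemma Emu_le mu f g : Forall (fun p => 0 <= fst p) mu -> (forall u, f u <= g u) ->
  Emu mu f <= Emu mu g.
Proof.
  induction mu as [|a mu IH]; intros Hf H; unfold Emu; simpl; [lra|].
  inversion Hf; subst. fold (Emu mu f) (Emu mu g).
  pose proof (IH H3 H). pose proof (H (snd a)). pose proof (Rmult_le_compat_l _ _ _ H2 H1). lra.
Qed.

Lemma Emu_swap mu N (t : (nat -> nat) -> nat -> R) W :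
  rsum N (fun q' => Emu mu (fun u => t u q') * W q') = Emu mu (fun u => rsum N (fun q' => t u q' * W q')).
Proof.
  induction mu as [|a mu IH]; unfold Emu; simpl.
  - apply rsum_zero; intros; lra.
  - fold (Emu mu (fun u => rsum N (fun q' => t u q' * W q'))). rewrite <- IH.
    rewrite <- rsum_scal, <- rsum_plus. apply rsum_ext_lt; intros. unfold Emu. ring.
Qed.

Lemma conv_nonneg p q : (forall i, 0 <= p i) -> (forall i, 0 <= q i) -> forall k, 0 <= conv p q k.
Proof. intros Hp Hq k. unfold conv. apply rsum_nonneg. intros. apply Rmult_le_pos; auto. Qed.

Lemma arrlaw_nonneg n m : (n <= NB Mdl)%nat -> cache Mdl n m = true -> forall i, 0 <= arrlaw Mdl n m i.
Proof.
  intros Hn Hc. pose proof (cache_range Mdl n m Hc) as Hm.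
  unfold arrlaw. destruct (Nat.eqb n 0).
  - unfold tildeA.
    assert (G : forall l acc, (forall n', In n' l -> (n' <= NB Mdl)%nat) -> (forall i, 0 <= acc i) ->
      forall i, 0 <= fold_left (fun acc n => if cache Mdl n m then acc else conv acc (arr Mdl n m)) l acc i).
    { induction l as [|a l IH]; intros acc Hl Ha; simpl; auto.
      apply IH. intros; apply Hl; right; auto.
      destruct (cache Mdl a m); auto. apply conv_nonneg; auto. intros; apply arr_nonneg; [apply Hl; left; auto|lia]. }
    apply G. intros n' Hin. apply in_seq in Hin. lia. intros; apply arr_nonneg; auto. lia.
  - intros; apply arr_nonneg; auto.
Qed.

Definition Gt (V : nat -> nat -> nat -> R) n m q u :=
  rsum (S (cap Mdl n m)) (fun q' => trP Mdl n m q u q' * V n m q').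

Lemma Gt_F V n m q u : Gt V n m q u = F (arrlaw Mdl n m) (V n m) (cap Mdl n m) (if served u n m then O else q).
Proof. reflexivity. Qed.

Definition monoV (V : nat -> nat -> nat -> R) := forall n m, (n <= NB Mdl)%nat -> cache Mdl n m = true ->
  forall a b, (a <= b <= cap Mdl n m)%nat -> V n m a <= V n m b.

Lemma Gt_mono V n m u a b : monoV V -> (n <= NB Mdl)%nat -> cache Mdl n m = true ->
  (a <= b <= cap Mdl n m)%nat -> Gt V n m a u <= Gt V n m b u.
Proof.
  intros HV Hn Hc Hab. rewrite !Gt_F. apply F_mono.
  apply arrlaw_nonneg; auto. apply HV; auto. destruct (served u n m); lia.
Qed.

Lemma Gt_served V n m u a b : served u n m = true -> Gt V n m a u = Gt V n m b u.
Proof. intros H. rewrite !Gt_F, H. reflexivity. Qed.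

Lemma Gt_unserved V n m u v a : served u n m = false -> served v n m = false -> Gt V n m a u = Gt V n m a v.
Proof. intros H H'. rewrite !Gt_F, H, H'. reflexivity. Qed.

Lemma Vit_mono mu Qdag : Forall (fun p => 0 <= fst p) mu -> forall l, monoV (Vit Mdl mu Qdag l).
Proof.
  intros Hmu l. induction l; intros n m Hn Hc a b Hab; simpl; [lra|].
  cut (Jnext Mdl mu (Vit Mdl mu Qdag l) n m a <= Jnext Mdl mu (Vit Mdl mu Qdag l) n m b). lra.
  unfold Jnext. rewrite !(Emu_swap mu _ (fun u q' => trP Mdl n m _ u q')).
  apply Rplus_le_compat; apply Emu_le; auto; intros u.
  - unfold gnm. pose proof (le_INR a b ltac:(lia)). lra.
  - apply (Gt_mono (Vit Mdl mu Qdag l)); auto.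
Qed.

Lemma Vhat_mono mu Qdag Vhat : Forall (fun p => 0 <= fst p) mu ->
  (forall n m q, (n <= NB Mdl)%nat -> cache Mdl n m = true -> (q <= cap Mdl n m)%nat ->
     Un_cv (fun l => Vit Mdl mu Qdag l n m q) (Vhat n m q)) -> monoV Vhat.
Proof.
  intros Hmu Hc n m Hn Hcn a b Hab.
  apply (@Rle_cv_lim (fun l => Vit Mdl mu Qdag l n m a) (fun l => Vit Mdl mu Qdag l n m b)).
  intros l; apply (Vit_mono mu Qdag Hmu l n m); auto. apply Hc; auto; lia. apply Hc; auto; lia.
Qed.

End S.

Section S.
Variable Mdl : Model.

Lemma sumDom_pt (fa fb : nat -> nat -> R) n m :
  (forall i j, (i <> n \/ j <> m) -> fb i j = fa i j) ->
  (n <= NB Mdl)%nat -> (m <= MC Mdl)%nat -> cache Mdl n m = true ->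
  sumDom Mdl fb = sumDom Mdl fa + (fb n m - fa n m).
Proof.
  intros H Hn Hm Hc. unfold sumDom.
  rewrite (rsum_diff _ (fun i => rsum (S (MC Mdl)) (fun j => if cache Mdl i j then fa i j else 0)) _ n).
  2:{ intros i Hi. cbv beta. apply rsum_ext_lt. intros j _. cbv beta. rewrite H; auto. }
  replace (Nat.ltb n (S (NB Mdl))) with true by (symmetry; apply Nat.ltb_lt; lia).
  rewrite (rsum_diff (S (MC Mdl)) (fun j => if cache Mdl n j then fa n j else 0) (fun j => if cache Mdl n j then fb n j else 0) m).
  2:{ intros j Hj. cbv beta. rewrite H; auto. }
  replace (Nat.ltb m (S (MC Mdl))) with true by (symmetry; apply Nat.ltb_lt; lia).
  rewrite Hc. ring.
Qed.

Lemma upd_same Q n m x : upd Q n m x n m = x.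
Proof. unfold upd. rewrite !Nat.eqb_refl. reflexivity. Qed.

Lemma upd_other Q n m x i j : (i <> n \/ j <> m) -> upd Q n m x i j = Q i j.
Proof. intros H. unfold upd. destruct (Nat.eqb_spec i n); destruct (Nat.eqb_spec j m); simpl; auto; lia. Qed.

Lemma Jhat_Gt V Q u : Jhat Mdl V Q u = gcost Mdl Q u + sumDom Mdl (fun i j => Gt Mdl V i j (Q i j) u).
Proof. reflexivity. Qed.

Lemma Jhat_upd V Q u n m a b : (n <= NB Mdl)%nat -> cache Mdl n m = true ->
  Jhat Mdl V (upd Q n m b) u = Jhat Mdl V (upd Q n m a) u + (INR b - INR a) + (Gt Mdl V n m b u - Gt Mdl V n m a u).
Proof.
  intros Hn Hc. pose proof (cache_range Mdl n m Hc).
  rewrite !Jhat_Gt. unfold gcost, dQ.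
  rewrite (sumDom_pt (fun i j => INR (upd Q n m a i j)) (fun i j => INR (upd Q n m b i j)) n m); try lia; auto.
  2:{ intros; rewrite !upd_other; auto. }
  rewrite (sumDom_pt (fun i j => Gt Mdl V i j (upd Q n m a i j) u) (fun i j => Gt Mdl V i j (upd Q n m b i j) u) n m); try lia; auto.
  2:{ intros; rewrite !upd_other; auto. }
  rewrite !upd_same. unfold Gt. ring.
Qed.

Lemma Delta_upd V Q u v n m a b : (n <= NB Mdl)%nat -> cache Mdl n m = true ->
  Deltahat Mdl V u v (upd Q n m b) = Deltahat Mdl V u v (upd Q n m a)
   + (Gt Mdl V n m b u - Gt Mdl V n m a u) - (Gt Mdl V n m b v - Gt Mdl V n m a v).
Proof. intros Hn Hc. unfold Deltahat. rewrite !(Jhat_upd V Q _ n m a b) by auto. ring. Qed.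

Lemma upd_id Q n m : upd Q n m (Q n m) = Q.
Proof. apply functional_extensionality; intros i; apply functional_extensionality; intros j.
  unfold upd. destruct (Nat.eqb_spec i n); destruct (Nat.eqb_spec j m); subst; auto. Qed.

Lemma upd_comm Q n m x n' m' y : (n <> n' \/ m <> m') -> upd (upd Q n m x) n' m' y = upd (upd Q n' m' y) n m x.
Proof. intros H. apply functional_extensionality; intros i; apply functional_extensionality; intros j.
  unfold upd. destruct (Nat.eqb_spec i n); destruct (Nat.eqb_spec j m); destruct (Nat.eqb_spec i n'); destruct (Nat.eqb_spec j m'); subst; simpl; auto; lia. Qed.

End S.

Lemma decP_true P : decP P = true -> P.
Proof. unfold decP. destruct excluded_middle_informative; auto; discriminate. Qed.
Lemma decP_false P : decP P = false -> ~ P.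
Proof. unfold decP. destruct excluded_middle_informative; auto; discriminate. Qed.

Lemma find_max_some P k x : find_max P k = Some x -> P x /\ (x <= k)%nat.
Proof.
  induction k; simpl.
  - destruct (decP (P 0%nat)) eqn:E; intros H; inversion H; subst. split; [apply decP_true; auto|lia].
  - destruct (decP (P (S k))) eqn:E; intros H.
    + inversion H; subst. split; [apply decP_true; auto|lia].
    + destruct (IHk H); split; auto.
Qed.

Lemma find_min_aux_spec P f : forall i,
  match find_min_aux P i f with
  | Some x => P x /\ (i <= x < i + f)%nat /\ (forall z, (i <= z < x)%nat -> ~ P z)
  | None => forall z, (i <= z < i + f)%nat -> ~ P z
  end.
Proof.
  induction f; intros i; simpl.
  - intros; lia.
  - destruct (decP (P i)) eqn:E.
    + split; [apply decP_true; auto|]. split; [lia|]. intros; lia.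
    + specialize (IHf (S i)). destruct (find_min_aux P (S i) f).
      * destruct IHf as [A [B C]]. split; auto. split; [lia|]. intros z Hz.
        destruct (Nat.eq_dec z i); [subst; apply decP_false; auto|apply C; lia].
      * intros z Hz. destruct (Nat.eq_dec z i); [subst; apply decP_false; auto|apply IHf; lia].
Qed.

Lemma find_min_spec P k :
  match find_min P k with
  | Some x => P x /\ (x <= k)%nat /\ (forall z, (z < x)%nat -> ~ P z)
  | None => forall z, (z <= k)%nat -> ~ P z
  end.
Proof.
  unfold find_min. pose proof (find_min_aux_spec P (S k) 0). destruct (find_min_aux P 0 (S k)).
  - destruct H as [A [B C]]. split; auto. split; [lia|]. intros; apply C; lia.
  - intros; apply H; lia.
Qed.

Lemma find_min_mono (P P' : nat -> Prop) k : (forall z, (z <= k)%nat -> P z -> P' z) ->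
  le_pinf (find_min P' k) (find_min P k).
Proof.
  intros H. pose proof (find_min_spec P k) as A. pose proof (find_min_spec P' k) as B.
  destruct (find_min P k) as [a|]; destruct (find_min P' k) as [b|]; simpl; auto.
  - destruct A as [A1 [A2 A3]]. destruct B as [B1 [B2 B3]].
    destruct (Nat.le_gt_cases b a); auto. exfalso; apply (B3 a); auto.
  - destruct A as [A1 [A2 A3]]. apply (B a); auto.
Qed.

Lemma served_zero n m : (1 <= m)%nat -> served zero_action n m = false.
Proof. intros H. unfold served, zero_action. destruct (Nat.eqb_spec 0 m); [lia|]. rewrite Bool.andb_false_r. reflexivity. Qed.

Lemma served_self u n m : u n = m -> served u n m = true.
Proof. intros H. unfold served. destruct (Nat.eqb_spec n 0).
  - rewrite e in H. rewrite H, Nat.eqb_refl; reflexivity.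
  - rewrite H, Nat.eqb_refl. simpl. destruct (u 0%nat =? m); reflexivity. Qed.

Lemma served_MBS u n m : u 0%nat = m -> served u n m = true.
Proof. intros H. unfold served. rewrite H, Nat.eqb_refl; reflexivity. Qed.

Theorem theorem2 (Mdl : Model) (mu : list (R * (nat -> nat)))
  (Hmu : is_base_policy Mdl mu)
  (Qdag : nat -> nat -> nat) (HQdag : validQ Mdl Qdag)
  (Vhat : nat -> nat -> nat -> R)
  (Hconv : forall n m q, (n <= NB Mdl)%nat -> cache Mdl n m = true ->
             (q <= cap Mdl n m)%nat ->
             Un_cv (fun l => Vit Mdl mu Qdag l n m q) (Vhat n m q)) :
  (* (1) *)
  (forall Q, validQ Mdl Q ->
     (forall n m, (n <= NB Mdl)%nat -> cache Mdl n m = true ->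
        le_ninf (Q n m) (phi_plus Mdl Vhat (zero_action) Q n m)) ->
     forall v, inU Mdl v ->
       Deltahat Mdl Vhat zero_action v Q <= 0 /\
       Jhat Mdl Vhat Q zero_action <= Jhat Mdl Vhat Q v)
  /\
  (* (2) *)
  (forall u n m, inU Mdl u -> (n <= NB Mdl)%nat -> cache Mdl n m = true -> u n = m ->
     forall Q, validQ Mdl Q ->
       ge_pinf (Q n m) (phi_minus Mdl Vhat u Q n m) ->
       forall v, inU Mdl v ->
         Deltahat Mdl Vhat u v Q <= 0 /\ Jhat Mdl Vhat Q u <= Jhat Mdl Vhat Q v)
  /\
  (* (2), monotonicity of hat phi^-_u(Q_{-0,-m}) in Q_{n,m}, n in N_m *)
  (forall u m, inU Mdl u -> cache Mdl O m = true -> u O = m ->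
     forall n, (1 <= n <= NB Mdl)%nat -> cache Mdl n m = true ->
     forall Q, validQ Mdl Q ->
     forall x y, (x <= y)%nat -> (y <= cap Mdl n m)%nat ->
       le_pinf (phi_minus Mdl Vhat u (upd Q n m y) O m)
               (phi_minus Mdl Vhat u (upd Q n m x) O m)).
Proof.
  destruct Hmu as [Hf _].
  assert (Hw : Forall (fun p => 0 <= fst p) mu) by (eapply Forall_impl; [|exact Hf]; intros a [A _]; exact A).
  pose proof (Vhat_mono Mdl mu Qdag Vhat Hw Hconv) as HV.
  split; [|split].
  - intros Q HQ Hphi v Hv.
    assert (D : Deltahat Mdl Vhat zero_action v Q <= 0).
    { destruct (classic (v = zero_action)) as [->|Hne]; [unfold Deltahat; lra|].
      assert (Hex : exists k, v k <> 0%nat).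
      { apply NNPP; intro Hn. apply Hne. apply functional_extensionality. intros k. unfold zero_action.
        destruct (Nat.eq_dec (v k) 0); auto. exfalso; apply Hn; eauto. }
      destruct Hex as [k Hk].
      pose proof Hv as [Hv1 [Hv2 _]].
      assert (Hkn : (k <= NB Mdl)%nat).
      { destruct (le_lt_dec k (NB Mdl)); auto. rewrite Hv2 in Hk by auto. lia. }
      assert (Hck : cache Mdl k (v k) = true) by (destruct (Hv1 k Hkn); auto; lia).
      set (m := v k) in *.
      pose proof (cache_range Mdl k m Hck) as Hm.
      specialize (Hphi k m Hkn Hck). unfold le_ninf in Hphi.
      destruct (phi_plus Mdl Vhat zero_action Q k m) as [x|] eqn:E; [|contradiction].
      apply find_max_some in E. destruct E as [[Hx HP] _].
      specialize (HP v Hv Hne).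
      assert (Eq : Deltahat Mdl Vhat zero_action v Q = Deltahat Mdl Vhat zero_action v (upd Q k m (Q k m)))
        by (rewrite upd_id; reflexivity).
      rewrite Eq, (Delta_upd Mdl Vhat Q zero_action v k m x (Q k m)) by auto.
      assert (Hq : (Q k m <= cap Mdl k m)%nat) by (apply HQ; auto).
      pose proof (Gt_mono Mdl Vhat k m zero_action (Q k m) x HV Hkn Hck ltac:(lia)).
      destruct (served v k m) eqn:Es.
      + rewrite (Gt_served Mdl Vhat k m v (Q k m) x Es). lra.
      + rewrite !(Gt_unserved Mdl Vhat k m zero_action v) by (auto; apply served_zero; lia). lra. }
    split; auto. unfold Deltahat in D; lra.
  - intros u n m Hu Hn Hc Hun Q HQ Hge v Hv.
    assert (D : Deltahat Mdl Vhat u v Q <= 0).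
    { destruct (classic (v = u)) as [->|Hne]; [unfold Deltahat; lra|].
      unfold ge_pinf in Hge.
      pose proof (find_min_spec (PhiSet Mdl Vhat u Q n m) (cap Mdl n m)) as S.
      unfold phi_minus in Hge.
      destruct (find_min (PhiSet Mdl Vhat u Q n m) (cap Mdl n m)) as [x|]; [|contradiction].
      destruct S as [[Hx HP] _]. specialize (HP v Hv Hne).
      assert (Eq : Deltahat Mdl Vhat u v Q = Deltahat Mdl Vhat u v (upd Q n m (Q n m)))
        by (rewrite upd_id; reflexivity).
      rewrite Eq, (Delta_upd Mdl Vhat Q u v n m x (Q n m)) by auto.
      assert (Hq : (Q n m <= cap Mdl n m)%nat) by (apply HQ; auto).
      pose proof (Gt_mono Mdl Vhat n m v x (Q n m) HV Hn Hc ltac:(lia)).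
      rewrite (Gt_served Mdl Vhat n m u (Q n m) x) by (apply served_self; auto). lra. }
    split; auto. unfold Deltahat in D; lra.
  - intros u m Hu Hc0 Hu0 n Hn Hcn Q HQ x y Hxy Hy.
    unfold phi_minus. apply find_min_mono. intros z Hz [Hzc HP]. split; auto.
    intros v Hv Hne. specialize (HP v Hv Hne).
    rewrite (upd_comm Q n m y 0 m z) by lia.
    rewrite (upd_comm Q n m x 0 m z) in HP by lia.
    rewrite (Delta_upd Mdl Vhat (upd Q 0 m z) u v n m x y) by (auto; lia).
    pose proof (Gt_mono Mdl Vhat n m v x y HV ltac:(lia) Hcn ltac:(lia)).
    rewrite (Gt_served Mdl Vhat n m u y x) by (apply served_MBS; auto). lra.
Qed.
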